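(* Assume the setup and the monomial order in the context. Then $R$ is a Gröbner basis of $I$ with respect to $\le$, i.e. the monoid ideal $\mathrm{Tip}(I)$ of $X^*$ is generated by $\{\mathrm{tip}(g):g\in R\}$.
   Context: Let $k$ be a field and $n\ge 2$ an integer; write $[n]=\{1,\dots,n\}$ and $r(i)=n+1-i$. Let $X=\{u_{j,i},u^*_{j,i}:(j,i)\in[n]^2\}$ be a set of $2n^2$ distinct symbols and let $*$ be the involution of $X$ exchanging $u_{j,i}$ and $u^*_{j,i}$. Let $k\langle X\rangle$ be the free unital $k$-algebra on $X$, with $k$-basis the free monoid $X^*$ of monomials. For an $n\times n$ matrix $v=(v_{j,i})$ with entries in $X$ define $n\times n$ matrices $v^t,v^\star,v^\dagger$ with entries in $X$ by $v^t_{j,i}=v_{i,j}$, $v^\star_{j,i}=(v_{r(j),r(i)})^*$, $v^\dagger_{j,i}=(v_{r(i),r(j)})^*$. Let $u=(u_{j,i})$ and $M=\{u,u^t,u^\star,u^\dagger\}$. Let $I$ be the two-sided ideal generated by $R=\{\sum_{s=1}^n v_{j,r(s)}v^\dagger_{s,r(i)}-\delta_{j,i}1: v\in M,(j,i)\in[n]^2\}$. Monomial order: let $\le$ be the total order on $X$ with $u^*_{t,s}<u_{j,i}$ for all indices, $u_{t,s}<u_{j,i}$ iff $(t,s)<(j,i)$ lexicographically, and $u^*_{t,s}<u^*_{j,i}$ iff $(j,i)<(t,s)$ lexicographically; extend it degree-lexicographically to $X^*$ (shorter monomials are smaller; monomials of equal length are compared at the first differing letter). For $0\ne p\in k\langle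 X\rangle$, $\mathrm{tip}(p)$ is the $\le$-largest monomial with nonzero coefficient in $p$, and $\mathrm{Tip}(I)=\{\mathrm{tip}(p):0\ne p\in I\}$. *)

(* Defs.v *)
From HB Require Import structures.
From mathcomp Require Import all_boot all_order all_algebra.
Set Implicit Arguments. Unset Strict Implicit. Unset Printing Implicit Defensive.
Import GRing.Theory.
Local Open Scope ring_scope.

(* Letters: (b, (j, i)) with b = false for u_{j,i} and b = true for u^*_{j,i}.
   Indices 'I_n are 0-based: ordinal a stands for a+1 in [n]. *)
Definition letter (n : nat) := (bool * ('I_n * 'I_n))%type.
Definition monomial (n : nat) := seq (letter n).

Definition ustar {n} (x : letter n) : letter n := (~~ x.1, x.2).

(* r(i) = n+1-i, in 0-based form *)
Definition r {n} (i : 'I_n) : 'I_n := rev_ord i.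

Definition lex_lt {n} (p q : 'I_n * 'I_n) : bool :=
  (p.1 < q.1)%N || ((p.1 == q.1) && (p.2 < q.2)%N).

Definition letter_lt {n} (x y : letter n) : bool :=
  match x.1, y.1 with
  | true, false => true
  | false, true => false
  | false, false => lex_lt x.2 y.2
  | true, true => lex_lt y.2 x.2
  end.

Fixpoint word_lex_lt {n} (v w : monomial n) : bool :=
  match v, w with
  | x :: v', y :: w' => if x == y then word_lex_lt v' w' else letter_lt x y
  | _, _ => false
  end.

Definition mon_lt {n} (v w : monomial n) : bool :=
  (size v < size w)%N || ((size v == size w) && word_lex_lt v w).
Definition mon_le {n} (v w : monomial n) : bool := (v == w) || mon_lt v w.

(* Elements of k<X> are represented by formal finite sums
   sum_t t.1 * t.2 (coefficient, monomial); two representations denote the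
   same element iff they have the same coefficient function [coef]. *)
Definition fpoly (k : fieldType) (n : nat) := seq (k * monomial n).

Definition coef {k : fieldType} {n} (p : fpoly k n) (w : monomial n) : k :=
  \sum_(t <- p | t.2 == w) t.1.

Definition fpoly_add {k : fieldType} {n} (p q : fpoly k n) : fpoly k n := p ++ q.
Definition fpoly_mul {k : fieldType} {n} (p q : fpoly k n) : fpoly k n :=
  [seq (a.1 * b.1, a.2 ++ b.2) | a <- p, b <- q].

Definition is_tip {k : fieldType} {n} (p : fpoly k n) (w : monomial n) : Prop :=
  coef p w != 0 /\ forall v, coef p v != 0 -> mon_le v w.

Definition xmat (n : nat) := 'I_n -> 'I_n -> letter n.
Definition umat (n : nat) : xmat n := fun j i => (false, (j, i)).
Definition mtr {n} (v : xmat n) : xmat n := fun j i => v i j.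
Definition mstar {n} (v : xmat n) : xmat n := fun j i => ustar (v (r j) (r i)).
Definition mdag {n} (v : xmat n) : xmat n := fun j i => ustar (v (r i) (r j)).

Definition inM n (v : xmat n) : Prop :=
  v = @umat n \/ v = mtr (@umat n) \/ v = mstar (@umat n) \/ v = mdag (@umat n).

Definition relation (k : fieldType) {n} (v : xmat n) (j i : 'I_n) : fpoly k n :=
  [seq (1, [:: v j (r s); mdag v s (r i)]) | s <- enum 'I_n]
  ++ (if j == i then [:: (-1, [::])] else [::]).

Definition inR (k : fieldType) n (g : fpoly k n) : Prop :=
  exists v, exists j, exists i, inM v /\ g = relation k v j i.

(* I = the two-sided ideal of k<X> generated by R: the least set containing R,
   closed under addition and under left/right multiplication by arbitrary
   elements, and respecting equality in k<X>. *)
Inductive inI (k : fieldType) n : fpoly k n -> Prop :=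
| inI_gen g : inR g -> inI g
| inI_add p q : inI p -> inI q -> inI (fpoly_add p q)
| inI_mull a p : inI p -> inI (fpoly_mul a p)
| inI_mulr p a : inI p -> inI (fpoly_mul p a)
| inI_ext p q : inI p -> coef p =1 coef q -> inI q.

(* Main.v *)
Require Import Defs.
From mathcomp Require Import all_boot all_order all_algebra.
From mathcomp Require Import zify ring.
Set Implicit Arguments. Unset Strict Implicit. Unset Printing Implicit Defensive.
Import GRing.Theory.
Local Open Scope ring_scope.
Arguments r : simpl never.

Section Order.
Variable m : nat.
Local Notation n := m.+2.

Lemma wlex_cat (v w b c : monomial n) : word_lex_lt v w -> word_lex_lt (v ++ b) (w ++ c).
Proof.
elim: v w => [|x v IH] [|y w] //=.
by case: (x == y) => //; apply: IH.
Qed.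

Lemma wlex_catl (a v w : monomial n) : word_lex_lt (a ++ v) (a ++ w) = word_lex_lt v w.
Proof. by elim: a => //= x a IH; rewrite eqxx. Qed.

Lemma mon_lt_cat (a v w b : monomial n) : mon_lt v w -> mon_lt (a ++ v ++ b) (a ++ w ++ b).
Proof.
rewrite /mon_lt !size_cat => /orP [H|/andP [H1 H2]].
  by rewrite ltn_add2l ltn_add2r H.
apply/orP; right; rewrite (eqP H1) eqxx /= wlex_catl; exact: wlex_cat.
Qed.

Definition idx (p : 'I_n * 'I_n) : nat := (p.1 * n + p.2)%N.
Lemma idx_lt p : (idx p < n * n)%N.
Proof. rewrite /idx; case: p => [[a Ha] [b Hb]] /=; nia. Qed.

Lemma lex_idx p q : lex_lt p q -> (idx p < idx q)%N.
Proof.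
rewrite /lex_lt /idx; case: p q => [[a Ha] [b Hb]] [[c Hc] [d Hd]] /=.
case/orP => [H|/andP [/eqP [] H1 H2]].
  have : (a.+1 * m.+2 <= c * m.+2)%N by rewrite leq_mul2r H orbT.
  rewrite mulSn; lia.
subst; lia.
Qed.

Definition lr (x : letter n) : nat :=
  if x.1 then ((n * n).-1 - idx x.2)%N else (n * n + idx x.2)%N.
Definition K : nat := ((n * n).*2)%N.

Lemma lr_lt x : (lr x < K)%N.
Proof. rewrite /lr /K; have := idx_lt x.2; case: x.1; lia. Qed.

Lemma letter_lr x y : letter_lt x y -> (lr x < lr y)%N.
Proof.
rewrite /letter_lt /lr; case: x y => [[] p] [[] q] //= H.
- have := lex_idx H; have := idx_lt p; have := idx_lt q; lia.
- have := idx_lt p; have := idx_lt q; lia.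
- have := lex_idx H; lia.
Qed.

Fixpoint wval (w : monomial n) : nat :=
  if w is x :: w' then (lr x * K ^ size w' + wval w')%N else 0%N.

Lemma wval_lt w : (wval w < K ^ size w)%N.
Proof.
elim: w => [|x w IH] /=; first by rewrite expn0.
rewrite expnS; have := lr_lt x; set P := (K ^ size w)%N; nia.
Qed.

Lemma wval_mono v w : size v = size w -> word_lex_lt v w -> (wval v < wval w)%N.
Proof.
elim: v w => [|x v IH] [|y w] //= [Hs].
case: eqP => [-> H|_ H]; first by rewrite Hs ltn_add2l; apply: IH.
have := letter_lr H; have := wval_lt v; rewrite Hs; set P := (K ^ size w)%N; nia.
Qed.

Definition mu (w : monomial n) : nat := (K ^ size w + wval w)%N.

Lemma K_ge2 : (2 <= K)%N.
Proof. rewrite /K; nia. Qed.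

Lemma mon_lt_mu v w : mon_lt v w -> (mu v < mu w)%N.
Proof.
rewrite /mon_lt /mu => /orP [H|/andP [/eqP H1 H2]].
  have h1 := wval_lt v.
  have h2 : (K ^ (size v).+1 <= K ^ size w)%N by rewrite leq_exp2l // K_ge2.
  have h3 : ((K ^ size v).*2 <= K ^ (size v).+1)%N by rewrite expnS -mul2n leq_mul2r K_ge2 orbT.
  lia.
by rewrite H1 ltn_add2l; apply: wval_mono.
Qed.

End Order.

Section Psi.
Variable k : fieldType.
Variable m : nat.
Local Notation n := m.+2.
Local Notation M := (@ord_max m.+1).
Local Notation O := (@ord0 m.+1).
Local Notation u := (@umat n).

Definition Psi (F : monomial n -> k) (p : fpoly k n) : k := \sum_(t <- p) t.1 * F t.2.

Lemma Psi_ext F G p : F =1 G -> Psi F p = Psi G p.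
Proof. by move=> e; apply: eq_bigr => t _; rewrite e. Qed.

Lemma Psi_cat F p q : Psi F (p ++ q) = Psi F p + Psi F q.
Proof. by rewrite /Psi big_cat. Qed.

Lemma Psi_mull F p q :
  Psi F (fpoly_mul p q) = \sum_(s <- p) s.1 * Psi (fun w => F (s.2 ++ w)) q.
Proof.
rewrite /Psi /fpoly_mul big_allpairs_dep /=; apply: eq_bigr => s _.
rewrite big_distrr; apply: eq_bigr => t _ /=; by rewrite mulrA.
Qed.

Lemma Psi_mulr F p q :
  Psi F (fpoly_mul p q) = \sum_(s <- q) s.1 * Psi (fun w => F (w ++ s.2)) p.
Proof.
rewrite /Psi /fpoly_mul big_allpairs_dep /= exchange_big; apply: eq_bigr => s _.
rewrite big_distrr; apply: eq_bigr => t _ /=.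
by rewrite mulrA [s.1 * _]mulrC.
Qed.

Lemma rK (i : 'I_n) : r (r i) = i.
Proof. exact: rev_ordK. Qed.

Lemma Psi_rel F (v : xmat n) j i :
  Psi F (relation k v j i) =
  \sum_(s : 'I_n) F [:: v j (r s); mdag v s (r i)] - (j == i)%:R * F [::].
Proof.
rewrite /Psi /relation big_cat big_map big_enum /=.
congr (_ + _); first by apply: eq_bigr => s _; rewrite mul1r.
by case: (j == i); rewrite ?big_nil ?big_seq1 /= ?mulr1n ?mulr0n ?mulN1r ?mul1r ?mul0r ?subr0 ?oppr0.
Qed.

Lemma PsiA F (j i : 'I_n) : Psi F (relation k u j i) =
  \sum_(t : 'I_n) F [:: (false, (j, t)); (true, (i, t))] - (j == i)%:R * F [::].
Proof.
rewrite Psi_rel /mdag /ustar /umat /= (reindex_inj (@rev_ord_inj n)) /=.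
congr (_ - _); apply: eq_bigr => s _; by rewrite /r !rev_ordK.
Qed.

Lemma PsiB F (j i : 'I_n) : Psi F (relation k (mtr u) j i) =
  \sum_(t : 'I_n) F [:: (false, (t, j)); (true, (t, i))] - (j == i)%:R * F [::].
Proof.
rewrite Psi_rel /mdag /mtr /ustar /umat /= (reindex_inj (@rev_ord_inj n)) /=.
congr (_ - _); apply: eq_bigr => s _; by rewrite /r !rev_ordK.
Qed.

Lemma PsiC F (a b : 'I_n) : Psi F (relation k (mstar u) (r a) (r b)) =
  \sum_(t : 'I_n) F [:: (true, (a, t)); (false, (b, t))] - (a == b)%:R * F [::].
Proof.
rewrite Psi_rel /mdag /mstar /ustar /umat /=.
rewrite (inj_eq (@rev_ord_inj n)).
congr (_ - _); apply: eq_bigr => s _; by rewrite /r !rev_ordK.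
Qed.

Lemma PsiD F (a b : 'I_n) : Psi F (relation k (mdag u) (r a) (r b)) =
  \sum_(t : 'I_n) F [:: (true, (t, a)); (false, (t, b))] - (a == b)%:R * F [::].
Proof.
rewrite Psi_rel /mdag /ustar /umat /=.
rewrite (inj_eq (@rev_ord_inj n)).
congr (_ - _); apply: eq_bigr => s _; by rewrite /r !rev_ordK.
Qed.

End Psi.

Section Rules.
Variable k : fieldType.
Variable m : nat.
Local Notation n := m.+2.
Local Notation M := (@ord_max m.+1).
Local Notation O := (@ord0 m.+1).
Local Notation u := (@umat n).

Inductive isrule : fpoly k n -> letter n -> letter n -> Prop :=
| RA (j i : 'I_n) : isrule (relation k u j i) (false, (j, M)) (true, (i, M))
| RB (j i : 'I_n) : isrule (relation k (mtr u) j i) (false, (M, j)) (true, (M, i))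
| RC (a b : 'I_n) : isrule (relation k (mstar u) (r a) (r b)) (true, (a, O)) (false, (b, O))
| RD (a b : 'I_n) : isrule (relation k (mdag u) (r a) (r b)) (true, (O, a)) (false, (O, b)).

Lemma letter_lt_irr (x : letter n) : letter_lt x x = false.
Proof. by case: x => [[] [p q]]; rewrite /letter_lt /lex_lt /= !ltnn /= andbF. Qed.

Lemma mlt_head (x y : letter n) v w :
  size v = size w -> letter_lt x y -> mon_lt (x :: v) (y :: w).
Proof.
move=> Hs H; rewrite /mon_lt /= Hs eqxx ltnn /=.
case: eqP => [E|//]; by rewrite E letter_lt_irr in H.
Qed.

Lemma mlt_cons (x : letter n) v w : mon_lt v w -> mon_lt (x :: v) (x :: w).
Proof. by move=> H; have := mon_lt_cat [:: x] [::] H; rewrite !cats0. Qed.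

Lemma mlt_nil (w : monomial n) : w != [::] -> mon_lt [::] w.
Proof. by case: w. Qed.

Lemma ltM (t : 'I_n) : t != M -> (t < M)%N.
Proof.
have := ltn_ord t; rewrite ltnS leq_eqVlt => /orP [/eqP E|//].
by move=> /eqP []; apply: val_inj.
Qed.

Lemma gt0 (t : 'I_n) : t != O -> (O < t)%N.
Proof. by rewrite lt0n. Qed.

Lemma MO : (M == O) = false.
Proof. by []. Qed.

Lemma sum_delta (t0 : 'I_n) (G : 'I_n -> k) :
  \sum_(t : 'I_n) (t == t0)%:R * G t = G t0.
Proof.
rewrite (bigD1 t0) //= eqxx mul1r big1 ?addr0 // => t /negbTE ->.
by rewrite mul0r.
Qed.

Lemma sum_delta' (t0 : 'I_n) (G : 'I_n -> k) :
  \sum_(t : 'I_n) (t0 == t)%:R * G t = G t0.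
Proof. by rewrite -(sum_delta t0 G); apply: eq_bigr => t _; rewrite eq_sym. Qed.

Lemma coef_Psi (p : fpoly k n) w : coef p w = Psi (fun v => (v == w)%:R) p.
Proof.
rewrite /coef /Psi big_mkcond; apply: eq_bigr => t _.
by case: eqP => _; rewrite ?mulr1 ?mulr0.
Qed.

Lemma Psi_nz F (p : fpoly k n) : Psi F p != 0 -> exists2 t, t \in p & F t.2 != 0.
Proof.
move=> H; case: (boolP (has (fun t => F t.2 != 0) p)) => [/hasP [t ? ?]|/hasPn H0].
  by exists t.
case/eqP: H; rewrite /Psi big_seq big1 // => t /H0; rewrite negbK => /eqP ->.
by rewrite mulr0.
Qed.


Lemma sum_delta1 (t0 : 'I_n) : \sum_(t : 'I_n) ((t == t0)%:R : k) = 1.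
Proof.
rewrite (bigD1 t0) //= eqxx big1 ?addr0 // => t /negbTE ->.
by [].
Qed.

Lemma nil_cons2 (x y : letter n) : ([::] == [:: x; y]) = false.
Proof. by []. Qed.

Lemma rule_tip g x y : isrule g x y -> Psi (fun w => (w == [:: x; y])%:R) g = 1.
Proof.
case: g x y / => a b; rewrite ?PsiA ?PsiB ?PsiC ?PsiD nil_cons2 mulr0 subr0;
  under eq_bigr => t _ do rewrite !eqseq_cons !xpair_eqE !eqxx /= ?andbT ?andbb;
  exact: sum_delta1.
Qed.

Lemma mem_relation (v : xmat n) j i t : t \in relation k v j i ->
  (exists s, t = (1, [:: v j (r s); mdag v s (r i)])) \/ t.2 = [::].
Proof.
rewrite /relation mem_cat => /orP [/mapP [s _ ->]|]; first by left; exists s.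
by case: (_ == _) => //; rewrite inE => /eqP ->; right.
Qed.

Lemma rule_lower g x y : isrule g x y ->
  forall t, t \in g -> t.2 != [:: x; y] -> mon_lt t.2 [:: x; y].
Proof.
case: g x y / => a b t /mem_relation [[s ->]|->]; try (by move=> _; exact: mlt_nil).
- rewrite /mdag /ustar /umat /= rK; move: (r s) => {}s Hne; apply: mlt_head => //.
  rewrite /letter_lt /lex_lt /= eqxx ltnn /=; apply: ltM.
  by apply: contraNneq Hne => ->.
- rewrite /mdag /mtr /ustar /umat /= rK; move: (r s) => {}s Hne; apply: mlt_head => //.
  rewrite /letter_lt /lex_lt /= ltnn andbF orbF; apply: ltM.
  by apply: contraNneq Hne => ->.
- rewrite /mdag /mstar /ustar /umat /= !rK => Hne; apply: mlt_head => //.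
  rewrite /letter_lt /lex_lt /= eqxx ltnn /=; apply: gt0.
  by apply: contraNneq Hne => ->.
- rewrite /mdag /ustar /umat /= !rK => Hne; apply: mlt_head => //.
  rewrite /letter_lt /lex_lt /= ltnn andbF orbF; apply: gt0.
  by apply: contraNneq Hne => ->.
Qed.

Lemma Psi_split g x y F : isrule g x y ->
  Psi F g = F [:: x; y] + \sum_(t <- g | t.2 != [:: x; y]) t.1 * F t.2.
Proof.
move=> H; rewrite /Psi (bigID (fun t => t.2 == [:: x; y])) /=; congr (_ + _).
have -> : \sum_(t <- g | t.2 == [:: x; y]) t.1 * F t.2 =
    (\sum_(t <- g | t.2 == [:: x; y]) t.1) * F [:: x; y].
  by rewrite big_distrl; apply: eq_bigr => t /eqP ->.
by have := rule_tip H; rewrite -coef_Psi /coef => ->; rewrite mul1r.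
Qed.

Lemma rule_is_tip g x y : isrule g x y -> is_tip g [:: x; y].
Proof.
move=> H; split; first by rewrite coef_Psi (rule_tip H) oner_neq0.
move=> v Hv; rewrite /mon_le; case: eqP => //= Hne.
rewrite coef_Psi in Hv; case/Psi_nz: Hv => t tin.
case: (t.2 =P v) => [E _|_]; last by rewrite mulr0n eqxx.
rewrite -E; apply: (rule_lower H) => //; apply/eqP; by rewrite E.
Qed.

Lemma rule_inR g x y : isrule g x y -> inR g.
Proof.
case=> a b; [exists u | exists (mtr u) | exists (mstar u) | exists (mdag u)];
  do 2 eexists; (split; last reflexivity); rewrite /inM; tauto.
Qed.

Lemma inR_rule g : inR g -> exists x y, isrule g x y.
Proof.
case=> v [j [i [hv ->]]].
case: hv => [->|[->|[->|->]]].
- by exists (false, (j, M)), (true, (i, M)); constructor.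
- by exists (false, (M, j)), (true, (M, i)); constructor.
- by exists (true, (r j, O)), (false, (r i, O)); rewrite -{1}(rK j) -{1}(rK i); constructor.
- by exists (true, (O, r j)), (false, (O, r i)); rewrite -{1}(rK j) -{1}(rK i); constructor.
Qed.

Definition isredex (x y : letter n) : bool :=
  match x, y with
  | (false, (j, i)), (true, (j', i')) => ((i == M) && (i' == M)) || ((j == M) && (j' == M))
  | (true, (j, i)), (false, (j', i')) => ((i == O) && (i' == O)) || ((j == O) && (j' == O))
  | _, _ => false
  end.

Definition rule_of (x y : letter n) : fpoly k n :=
  match x, y with
  | (false, (j, i)), (true, (j', i')) =>
      if (i == M) && (i' == M) then relation k u j j' else relation k (mtr u) i i'
  | (true, (j, i)), (false, (j', i')) =>
      if (i == O) && (i' == O) then relation k (mstar u) (r j) (r j')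
      else relation k (mdag u) (r i) (r i')
  | _, _ => [::]
  end.

Lemma isredex_rule x y : isredex x y -> isrule (rule_of x y) x y.
Proof.
case: x y => [[] [j i]] [[] [j' i']] //=.
- case: ifP => [/andP [/eqP -> /eqP ->] _|_ /= /andP [/eqP -> /eqP ->]].
    exact: RC.
  exact: RD.
- case: ifP => [/andP [/eqP -> /eqP ->] _|_ /= /andP [/eqP -> /eqP ->]].
    exact: RA.
  exact: RB.
Qed.

Lemma rule_isredex g x y : isrule g x y -> isredex x y.
Proof. by case=> a b /=; rewrite ?eqxx ?orbT. Qed.

Fixpoint find_redex (w : monomial n) : option (monomial n * letter n * letter n * monomial n) :=
  match w with
  | x :: w' =>
    match w' with
    | y :: b => if isredex x y then Some ([::], x, y, b) else
        match find_redex w' with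
        | Some (a, x', y', b') => Some (x :: a, x', y', b')
        | None => None
        end
    | [::] => None
    end
  | [::] => None
  end.

Lemma find_some w a x y b : find_redex w = Some (a, x, y, b) ->
  w = a ++ x :: y :: b /\ isredex x y.
Proof.
elim: w a x y b => [|z w IH] a x y b //=; case: w IH => [|y' b'] IH //.
case: ifP => [H [<- <- <- <-] //|_].
case E: (find_redex _) => [[[[a' x'] y''] b'']|] // [<- <- <- <-].
by case: (IH _ _ _ _ E) => -> ->.
Qed.

Lemma find_none w : find_redex w = None ->
  forall a x y b, w = a ++ x :: y :: b -> ~~ isredex x y.
Proof.
elim: w => [|z w IH] H a x y b; first by case: a.
move: H => /= H.
case: a => [|z' a] /= [Ez Ew].
  by subst; move: H; case: (isredex x y).
have Hw : find_redex w = None.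
  move: H; case E: w => [|y' b'] // H; rewrite -E in H *.
  move: H; rewrite E; case: ifP => // _.
  by case: (find_redex _) => // [[[[? ?] ?] ?]].
exact: (IH Hw a x y b Ew).
Qed.

End Rules.

Section Lemmas.
Variable k : fieldType.
Variable m : nat.
Local Notation n := m.+2.
Local Notation M := (@ord_max m.+1).
Local Notation O := (@ord0 m.+1).
Local Notation u := (@umat n).
Local Notation isrule := (@isrule k m).
Local Notation Psi := (@Psi k m).

Ltac lt_fin := rewrite /letter_lt /lex_lt /= ?ltnn ?eqxx /= ?andbF ?orbF ?ltM ?gt0 ?orbT //.

Definition Hyp (F : monomial n -> k) (V : monomial n) : Prop :=
  forall a x y b g, isrule g x y -> mon_lt (a ++ x :: y :: b) V ->
    Psi (fun w => F (a ++ w ++ b)) g = 0.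

Lemma grid (T : 'I_n -> 'I_n -> k) (p0 q0 : 'I_n) (al be : 'I_n -> k) :
  (forall p, p != p0 -> \sum_q T p q = al p) ->
  (forall q, q != q0 -> \sum_p T p q = be q) ->
  \sum_p T p q0 = \sum_q T p0 q + (\sum_(p | p != p0) al p - \sum_(q | q != q0) be q).
Proof.
move=> Ha Hb.
have E1 : \sum_p \sum_q T p q = \sum_q T p0 q + \sum_(p | p != p0) al p.
  by rewrite (bigD1 p0) //=; congr (_ + _); apply: eq_bigr => p /Ha.
have E2 : \sum_p \sum_q T p q = \sum_p T p q0 + \sum_(q | q != q0) be q.
  by rewrite exchange_big (bigD1 q0) //=; congr (_ + _); apply: eq_bigr => q /Hb.
have : \sum_p T p q0 = \sum_p \sum_q T p q - \sum_(q | q != q0) be q by rewrite E2 addrK.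
by move=> ->; rewrite E1 addrA.
Qed.

Lemma sum_nd (t0 b : 'I_n) (G : 'I_n -> k) :
  \sum_(t | t != t0) (t == b)%:R * G t = G b - (t0 == b)%:R * G t0.
Proof.
have := sum_delta b G; rewrite (bigD1 t0) //= => E; rewrite -E.
by rewrite addrC addrK.
Qed.

Lemma sum_nd' (t0 b : 'I_n) (G : 'I_n -> k) :
  \sum_(t | t != t0) (b == t)%:R * G t = G b - (b == t0)%:R * G t0.
Proof.
rewrite eq_sym -sum_nd; apply: eq_bigr => t _; by rewrite eq_sym.
Qed.

Lemma inclAB F : Hyp F [:: (false, (M, M)); (true, (M, M))] ->
  Psi F (relation k u M M) = Psi F (relation k (mtr u) M M).
Proof.
move=> H; rewrite PsiA PsiB eqxx mulr1n mul1r.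
have := @grid (fun p q => F [:: (false, (p, q)); (true, (p, q))]) M M
  (fun=> F [::]) (fun=> F [::]).
rewrite subrr addr0 => -> //.
- move=> p hp; apply/eqP; rewrite -subr_eq0.
  have := H [::] _ _ [::] _ (@RA k m p p).
  rewrite PsiA eqxx mulr1n mul1r /= => -> //.
  by apply: mlt_head => //; lt_fin.
- move=> q hq; apply/eqP; rewrite -subr_eq0.
  have := H [::] _ _ [::] _ (@RB k m q q).
  rewrite PsiB eqxx mulr1n mul1r /= => -> //.
  by apply: mlt_head => //; lt_fin.
Qed.

Lemma inclCD F : Hyp F [:: (true, (O, O)); (false, (O, O))] ->
  Psi F (relation k (mstar u) (r O) (r O)) = Psi F (relation k (mdag u) (r O) (r O)).
Proof.
move=> H; rewrite PsiC PsiD eqxx mulr1n mul1r.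
have := @grid (fun p q => F [:: (true, (p, q)); (false, (p, q))]) O O
  (fun=> F [::]) (fun=> F [::]).
rewrite subrr addr0 => -> //.
- move=> p hp; apply/eqP; rewrite -subr_eq0.
  have := H [::] _ _ [::] _ (@RC k m p p).
  rewrite PsiC eqxx mulr1n mul1r /= => -> //.
  by apply: mlt_head => //; lt_fin.
- move=> q hq; apply/eqP; rewrite -subr_eq0.
  have := H [::] _ _ [::] _ (@RD k m q q).
  rewrite PsiD eqxx mulr1n mul1r /= => -> //.
  by apply: mlt_head => //; lt_fin.
Qed.

Lemma ovAD F (j b : 'I_n) :
  Hyp F [:: (false, (j, M)); (true, (O, M)); (false, (O, b))] ->
  Psi (fun w => F (w ++ [:: (false, (O, b))])) (relation k u j O) =
  Psi (fun w => F ((false, (j, M)) :: w)) (relation k (mdag u) (r M) (r b)).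
Proof.
move=> H; rewrite PsiA PsiD /=.
rewrite (@grid (fun p q => F [:: (false, (j, p)); (true, (q, p)); (false, (q, b))]) M O
  (fun t => (t == b)%:R * F [:: (false, (j, t))])
  (fun s => (j == s)%:R * F [:: (false, (s, b))])) /=.
- by rewrite sum_nd sum_nd'; ring.
- move=> p hp; apply/eqP; rewrite -subr_eq0.
  have := H [:: (false, (j, p))] _ _ [::] _ (@RD k m p b).
  rewrite PsiD /= => -> //.
  by apply: mlt_head => //; lt_fin.
- move=> q hq; apply/eqP; rewrite -subr_eq0.
  have := H [::] _ _ [:: (false, (q, b))] _ (@RA k m j q).
  rewrite PsiA /= => -> //.
  by apply: mlt_cons; apply: mlt_head => //; lt_fin.
Qed.

Lemma ovBC F (j b : 'I_n) :
  Hyp F [:: (false, (M, j)); (true, (M, O)); (false, (b, O))] ->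
  Psi (fun w => F (w ++ [:: (false, (b, O))])) (relation k (mtr u) j O) =
  Psi (fun w => F ((false, (M, j)) :: w)) (relation k (mstar u) (r M) (r b)).
Proof.
move=> H; rewrite PsiB PsiC /=.
rewrite (@grid (fun p q => F [:: (false, (p, j)); (true, (p, q)); (false, (b, q))]) M O
  (fun t => (t == b)%:R * F [:: (false, (t, j))])
  (fun s => (j == s)%:R * F [:: (false, (b, s))])) /=.
- by rewrite sum_nd sum_nd'; ring.
- move=> p hp; apply/eqP; rewrite -subr_eq0.
  have := H [:: (false, (p, j))] _ _ [::] _ (@RC k m p b).
  rewrite PsiC /= => -> //.
  by apply: mlt_head => //; lt_fin.
- move=> q hq; apply/eqP; rewrite -subr_eq0.
  have := H [::] _ _ [:: (false, (b, q))] _ (@RB k m j q).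
  rewrite PsiB /= => -> //.
  by apply: mlt_cons; apply: mlt_head => //; lt_fin.
Qed.

Lemma ovCB F (a i : 'I_n) :
  Hyp F [:: (true, (a, O)); (false, (M, O)); (true, (M, i))] ->
  Psi (fun w => F (w ++ [:: (true, (M, i))])) (relation k (mstar u) (r a) (r M)) =
  Psi (fun w => F ((true, (a, O)) :: w)) (relation k (mtr u) O i).
Proof.
move=> H; rewrite PsiC PsiB /=.
rewrite (@grid (fun p q => F [:: (true, (a, p)); (false, (q, p)); (true, (q, i))]) O M
  (fun p => (p == i)%:R * F [:: (true, (a, p))])
  (fun q => (a == q)%:R * F [:: (true, (q, i))])) /=.
- by rewrite sum_nd sum_nd'; ring.
- move=> p hp; apply/eqP; rewrite -subr_eq0.
  have := H [:: (true, (a, p))] _ _ [::] _ (@RB k m p i).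
  rewrite PsiB /= => -> //.
  by apply: mlt_head => //; lt_fin.
- move=> q hq; apply/eqP; rewrite -subr_eq0.
  have := H [::] _ _ [:: (true, (q, i))] _ (@RC k m a q).
  rewrite PsiC /= => -> //.
  by apply: mlt_cons; apply: mlt_head => //; lt_fin.
Qed.

Lemma ovDA F (a i : 'I_n) :
  Hyp F [:: (true, (O, a)); (false, (O, M)); (true, (i, M))] ->
  Psi (fun w => F (w ++ [:: (true, (i, M))])) (relation k (mdag u) (r a) (r M)) =
  Psi (fun w => F ((true, (O, a)) :: w)) (relation k u O i).
Proof.
move=> H; rewrite PsiD PsiA /=.
rewrite (@grid (fun p q => F [:: (true, (p, a)); (false, (p, q)); (true, (i, q))]) O M
  (fun p => (p == i)%:R * F [:: (true, (p, a))])
  (fun q => (a == q)%:R * F [:: (true, (i, q))])) /=.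
- by rewrite sum_nd sum_nd'; ring.
- move=> p hp; apply/eqP; rewrite -subr_eq0.
  have := H [:: (true, (p, a))] _ _ [::] _ (@RA k m p i).
  rewrite PsiA /= => -> //.
  by apply: mlt_head => //; lt_fin.
- move=> q hq; apply/eqP; rewrite -subr_eq0.
  have := H [::] _ _ [:: (true, (i, q))] _ (@RD k m a q).
  rewrite PsiD /= => -> //.
  by apply: mlt_cons; apply: mlt_head => //; lt_fin.
Qed.

Lemma isrule_inv g x y : isrule g x y ->
 [\/ exists j i, [/\ g = relation k u j i, x = (false, (j, M)) & y = (true, (i, M))],
     exists j i, [/\ g = relation k (mtr u) j i, x = (false, (M, j)) & y = (true, (M, i))],
     exists a b, [/\ g = relation k (mstar u) (r a) (r b), x = (true, (a, O)) & y = (false, (b, O))] |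
     exists a b, [/\ g = relation k (mdag u) (r a) (r b), x = (true, (O, a)) & y = (false, (O, b))]].
Proof. by case=> a b; [apply: Or41|apply: Or42|apply: Or43|apply: Or44]; exists a, b. Qed.

Lemma rule_alt g x y : isrule g x y ->
  [\/ g = rule_of k x y,
      [/\ g = relation k (mtr u) M M, x = (false, (M, M)) & y = (true, (M, M))] |
      [/\ g = relation k (mdag u) (r O) (r O), x = (true, (O, O)) & y = (false, (O, O))]].
Proof.
case=> a b /=; rewrite ?eqxx /=; try by apply: Or31.
- case: ifP => [/andP [/eqP E1 /eqP E2]|_]; last by apply: Or31.
  by subst; apply: Or32.
- case: ifP => [/andP [/eqP E1 /eqP E2]|_]; last by apply: Or31.
  by subst; apply: Or33.
Qed.

Lemma incl F g1 g2 x y : Hyp F [:: x; y] -> isrule g1 x y -> isrule g2 x y ->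
  Psi F g1 = Psi F g2.
Proof.
move=> H H1 H2.
have key : forall g, isrule g x y -> Psi F g = Psi F (rule_of k x y).
  move=> g /rule_alt [-> //|[-> Ex Ey]|[-> Ex Ey]]; subst.
  - by rewrite /rule_of eqxx /=; symmetry; apply: inclAB.
  - by rewrite /rule_of eqxx /=; symmetry; apply: inclCD.
by rewrite (key _ H1) (key _ H2).
Qed.

Lemma overlap F g1 g2 x y z : Hyp F [:: x; y; z] -> isrule g1 x y -> isrule g2 y z ->
  Psi (fun w => F (w ++ [:: z])) g1 = Psi (fun w => F (x :: w)) g2.
Proof.
move=> H H1 H2.
case/isrule_inv: H1 => [][p [q [E1 E2 E3]]]; subst;
  case/isrule_inv: H2 => [][p' [q' [E4 E E6]]]; subst; try by case: E.
- by case: E => E1 E2; subst; apply: ovAD.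
- by case: E => E1 E2; subst; apply: ovBC.
- by case: E => E1 E2; subst; apply: ovCB.
- by case: E => E1 E2; subst; apply: ovDA.
Qed.

End Lemmas.

Section Main.
Variable k : fieldType.
Variable m : nat.
Local Notation n := m.+2.
Local Notation isrule := (@isrule k m).
Local Notation Psi := (@Psi k m).
Local Notation Hyp := (@Hyp k m).

Lemma Psi_swap (G : monomial n -> monomial n -> k) p q :
  Psi (fun v => Psi (G v) q) p = Psi (fun w => Psi (fun v => G v w) p) q.
Proof.
rewrite /Psi; under eq_bigr => t _ do rewrite big_distrr.
rewrite exchange_big; apply: eq_bigr => s _; rewrite big_distrr.
by apply: eq_bigr => t _ /=; rewrite !mulrA [t.1 * s.1]mulrC.
Qed.

Lemma Psi_lower G g x y : isrule g x y ->
  (forall v, mon_lt v [:: x; y] -> G v = 0) -> Psi G g = G [:: x; y].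
Proof.
move=> H HG; rewrite (Psi_split _ H) big_seq_cond big1 ?addr0 // => t /andP [tin hne].
by rewrite HG ?mulr0 //; apply: (rule_lower H).
Qed.

Lemma disj (G : monomial n -> monomial n -> k) g1 x1 y1 g2 x2 y2 :
  isrule g1 x1 y1 -> isrule g2 x2 y2 ->
  (forall v, mon_lt v [:: x1; y1] -> Psi (G v) g2 = 0) ->
  (forall v, mon_lt v [:: x2; y2] -> Psi (fun w => G w v) g1 = 0) ->
  Psi (fun w => G w [:: x2; y2]) g1 = Psi (G [:: x1; y1]) g2.
Proof.
move=> H1 H2 h1 h2.
rewrite -(Psi_lower (G := fun v => Psi (G v) g2) H1 h1).
rewrite -(Psi_lower (G := fun w => Psi (fun v => G v w) g1) H2 h2).
by rewrite Psi_swap.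
Qed.

Lemma decomp (a1 a2 b1 b2 : monomial n) x1 y1 x2 y2 :
  a1 ++ x1 :: y1 :: b1 = a2 ++ x2 :: y2 :: b2 -> (size a1 <= size a2)%N ->
  [\/ [/\ a1 = a2, x1 = x2, y1 = y2 & b1 = b2],
      [/\ a2 = a1 ++ [:: x1], x2 = y1 & b1 = y2 :: b2] |
      exists c, a2 = a1 ++ x1 :: y1 :: c /\ b1 = c ++ x2 :: y2 :: b2].
Proof.
elim: a1 a2 => [|z a1 IH] [|z' a2] //=.
- by case=> -> -> -> _; apply: Or31.
- case=> -> ; case: a2 => [|z'' a2] /= [-> ->] _.
    by apply: Or32.
  by apply: Or33; exists a2.
- case=> -> /IH {}IH; rewrite ltnS => /IH [[-> -> -> ->]|[-> -> ->]|[c [-> ->]]].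
  + by apply: Or31.
  + by apply: Or32.
  + by apply: Or33; exists c.
Qed.

Definition Cw (F : monomial n -> k) (V : monomial n) : Prop :=
  forall a x y b g, V = a ++ x :: y :: b -> isrule g x y ->
    Psi (fun w => F (a ++ w ++ b)) g = 0.

Lemma Hyp_of F W a V b : (forall V', mon_lt V' W -> Cw F V') -> W = a ++ V ++ b ->
  Hyp (fun v => F (a ++ v ++ b)) V.
Proof.
move=> IH EW a' x y b' g hr hlt.
have Hlt : mon_lt ((a ++ a') ++ x :: y :: (b' ++ b)) W.
  by rewrite EW; have := mon_lt_cat a b hlt; rewrite -!catA.
rewrite -(IH _ Hlt (a ++ a') x y (b' ++ b) g erefl hr).
by apply: Psi_ext => w; rewrite -!catA.
Qed.

Lemma two_redex F W : (forall V', mon_lt V' W -> Cw F V') ->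
  forall a1 x1 y1 b1 g1 a2 x2 y2 b2 g2,
  W = a1 ++ x1 :: y1 :: b1 -> W = a2 ++ x2 :: y2 :: b2 ->
  isrule g1 x1 y1 -> isrule g2 x2 y2 ->
  Psi (fun w => F (a1 ++ w ++ b1)) g1 = Psi (fun w => F (a2 ++ w ++ b2)) g2.
Proof.
move=> IH.
suff S : forall a1 x1 y1 b1 g1 a2 x2 y2 b2 g2, (size a1 <= size a2)%N ->
  W = a1 ++ x1 :: y1 :: b1 -> W = a2 ++ x2 :: y2 :: b2 ->
  isrule g1 x1 y1 -> isrule g2 x2 y2 ->
  Psi (fun w => F (a1 ++ w ++ b1)) g1 = Psi (fun w => F (a2 ++ w ++ b2)) g2.
  move=> a1 x1 y1 b1 g1 a2 x2 y2 b2 g2 E1 E2 H1 H2.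
  case: (leqP (size a1) (size a2)) => h; first exact: S h E1 E2 H1 H2.
  by symmetry; apply: S (ltnW h) E2 E1 H2 H1.
move=> a1 x1 y1 b1 g1 a2 x2 y2 b2 g2 hs E1 E2 H1 H2.
case: (decomp (etrans (esym E1) E2) hs) => [[Ea Ex Ey Eb]|[Ea Ex Eb]|[c [Ea Eb]]].
- move: H1; rewrite Ea Eb Ex Ey => H1.
  apply: (incl (F := fun v => F (a2 ++ v ++ b2))) H1 H2.
  exact: (Hyp_of (a := a2) (V := [:: x2; y2]) (b := b2) IH E2).
- rewrite Ea; move: H2 E1; rewrite Ex Eb => H2 E1.
  have Hy := Hyp_of (a := a1) (V := [:: x1; y1; y2]) (b := b2) IH E1.
  have := overlap Hy H1 H2.
  rewrite (Psi_ext _ (G := fun w => F (a1 ++ w ++ y2 :: b2))); last by move=> w; rewrite -catA.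
  move=> ->; apply: Psi_ext => w; by rewrite -catA.
- rewrite Ea; rewrite Eb in E1 *.
  have E : W = a1 ++ (x1 :: y1 :: c ++ [:: x2; y2]) ++ b2 by rewrite E1 /= -catA.
  have Hy := Hyp_of IH E.
  set F' := fun v => F (a1 ++ v ++ b2).
  have := @disj (fun v w => F' (v ++ c ++ w)) g1 x1 y1 g2 x2 y2 H1 H2.
  have L : Psi (fun w => F (a1 ++ w ++ c ++ [:: x2, y2 & b2])) g1 =
           Psi (fun w => F' (w ++ c ++ [:: x2; y2])) g1.
    by apply: Psi_ext => w; rewrite /F' -!catA.
  have R : Psi (fun w => F ((a1 ++ [:: x1, y1 & c]) ++ w ++ b2)) g2 =
           Psi (fun w => F' ([:: x1; y1] ++ c ++ w)) g2.
    by apply: Psi_ext => w; rewrite /F' -!catA.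
  rewrite L R; apply.
  + move=> v hv.
    have hl : mon_lt ((v ++ c) ++ [:: x2; y2]) (x1 :: y1 :: c ++ [:: x2; y2]).
      by rewrite -catA; exact: (mon_lt_cat [::] (c ++ [:: x2; y2]) hv).
    rewrite -(Hy _ _ _ _ _ H2 hl) /F'; apply: Psi_ext => w /=; by rewrite cats0 !catA.
  + move=> v hv.
    have := mon_lt_cat (x1 :: y1 :: c) [::] hv; rewrite !cats0 /= => hl.
    by rewrite -(Hy [::] _ _ _ _ H1 hl) /F'; apply: Psi_ext => w /=.
Qed.

End Main.

Lemma cat_lcancel (T : Type) (a x y : seq T) : a ++ x = a ++ y -> x = y.
Proof. by elim: a => //= z a IH [] /IH. Qed.

Lemma cat_rcancel (T : Type) (x y b : seq T) : x ++ b = y ++ b -> x = y.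
Proof.
move/(congr1 rev); rewrite !rev_cat => /cat_lcancel /(congr1 rev); by rewrite !revK.
Qed.

Lemma cat_eq2 (T : eqType) (a w t b : seq T) : (a ++ w ++ b == a ++ t ++ b) = (w == t).
Proof.
apply/eqP/eqP => [E|-> //]; exact: cat_rcancel (cat_lcancel E).
Qed.

Lemma sum_if_uniq (R : nmodType) (T : eqType) (S : seq T) x (c : R) :
  uniq S -> x \in S -> \sum_(v <- S) (if x == v then c else 0) = c.
Proof.
elim: S => //= y S IH /andP [hy hu]; rewrite inE big_cons.
case: eqP => [-> _|ne /= hx]; last by rewrite IH ?add0r.
rewrite big_seq big1 ?addr0 // => v hv; case: eqP => // E.
by rewrite E hv in hy.
Qed.

Section Normal.
Variable k : fieldType.
Variable m : nat.
Local Notation n := m.+2.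
Local Notation isrule := (@isrule k m).
Local Notation Psi := (@Psi k m).

Lemma Psi_coefS F (p : fpoly k n) S : uniq S -> {subset [seq t.2 | t <- p] <= S} ->
  Psi F p = \sum_(v <- S) coef p v * F v.
Proof.
move=> hu hs; rewrite /coef.
under eq_bigr => v _ do rewrite big_distrl big_mkcond /=.
rewrite exchange_big /Psi; apply: eq_big_seq => t tin.
have -> : \sum_(v <- S) (if t.2 == v then t.1 * F v else 0) =
          \sum_(v <- S) (if t.2 == v then t.1 * F t.2 else 0).
  by apply: eq_bigr => v _; case: eqP => // ->.
by rewrite sum_if_uniq //; apply: hs; apply/mapP; exists t.
Qed.

Lemma Psi_coef F (p q : fpoly k n) : coef p =1 coef q -> Psi F p = Psi F q.
Proof.
move=> H; set S := undup [seq t.2 | t <- p ++ q].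
have hu : uniq S by exact: undup_uniq.
rewrite (@Psi_coefS F p S) // ?(@Psi_coefS F q S) //.
- by apply: eq_bigr => v _; rewrite H.
- by move=> v hv; rewrite mem_undup map_cat mem_cat hv orbT.
- by move=> v hv; rewrite mem_undup map_cat mem_cat hv.
Qed.

Variable w0 : monomial n.

Fixpoint fF (fu : nat) (w : monomial n) : k :=
  if fu is fu'.+1 then
    match find_redex w with
    | None => (w == w0)%:R
    | Some (a, x, y, b) =>
        - \sum_(t <- rule_of k x y | t.2 != [:: x; y]) t.1 * fF fu' (a ++ t.2 ++ b)
    end
  else 0.

Lemma red_mu (w : monomial n) a x y b t : find_redex w = Some (a, x, y, b) ->
  t \in rule_of k x y -> t.2 != [:: x; y] -> (mu (a ++ t.2 ++ b) < mu w)%N.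
Proof.
case/find_some => -> /(isredex_rule k) H tin hne; apply: mon_lt_mu.
exact: (mon_lt_cat a b (rule_lower H tin hne)).
Qed.

Lemma fF_stable fu1 fu2 (w : monomial n) : (mu w < fu1)%N -> (mu w < fu2)%N -> fF fu1 w = fF fu2 w.
Proof.
elim: fu1 fu2 w => [|fu1 IH] [|fu2] w h1 h2; try by [].
all: try (by rewrite ltn0 in h1); try (by rewrite ltn0 in h2).
rewrite /=.
case E: (find_redex w) => [[[[a x] y] b]|] //; congr (- _).
rewrite big_seq_cond [RHS]big_seq_cond; apply: eq_bigr => t /andP [tin hne].
by rewrite (IH fu2) //; apply: leq_trans (red_mu E tin hne) _; rewrite -ltnS.
Qed.

Definition f w := fF (mu w).+1 w.

Lemma f_none (w : monomial n) : find_redex w = None -> f w = (w == w0)%:R.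
Proof. by rewrite /f /= => ->. Qed.

Lemma f_some (w : monomial n) a x y b : find_redex w = Some (a, x, y, b) ->
  f w = - \sum_(t <- rule_of k x y | t.2 != [:: x; y]) t.1 * f (a ++ t.2 ++ b).
Proof.
move=> E; rewrite /f /= E; congr (- _).
rewrite big_seq_cond [RHS]big_seq_cond; apply: eq_bigr => t /andP [tin hne].
by rewrite /f (@fF_stable (mu w) (mu (a ++ t.2 ++ b)).+1) //; exact: red_mu E tin hne.
Qed.

Lemma zero_redex (W : monomial n) a x y b : find_redex W = Some (a, x, y, b) ->
  Psi (fun w => f (a ++ w ++ b)) (rule_of k x y) = 0.
Proof.
move=> E; case/find_some: (E) => EW /(isredex_rule k) H.
rewrite (Psi_split _ H) /= -EW (f_some E).
by rewrite addNr.
Qed.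

Lemma main (W : monomial n) : Cw f W.
Proof.
move: {2}(mu W).+1 (ltnSn (mu W)) => N0; elim: N0 W => [|N0 IH] W hW.
  by rewrite ltn0 in hW.
move=> a x y b g EW hr.
have IH' : forall V', mon_lt V' W -> Cw f V'.
  by move=> V' hV; apply: IH; have := mon_lt_mu hV; lia.
case E: (find_redex W) => [[[[a0 x0] y0] b0]|]; last first.
  by have := find_none E EW; rewrite (rule_isredex hr).
case/find_some: (E) => E0 hr0.
rewrite (two_redex IH' EW E0 hr (isredex_rule k hr0)).
exact: zero_redex E.
Qed.

Lemma inI_Psi p : inI p -> forall a b, Psi (fun w => f (a ++ w ++ b)) p = 0.
Proof.
elim=> {p}.
- move=> g /inR_rule [x [y hr]] a b; exact: (main (W := a ++ x :: y :: b) erefl hr).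
- by move=> p q _ Hp _ Hq a b; rewrite /fpoly_add Psi_cat Hp Hq addr0.
- move=> A p _ Hp a b; rewrite Psi_mull big1 // => s _.
  have -> : Psi (fun w => f (a ++ (s.2 ++ w) ++ b)) p =
            Psi (fun w => f ((a ++ s.2) ++ w ++ b)) p.
    by apply: Psi_ext => w; rewrite !catA.
  by rewrite Hp mulr0.
- move=> p A _ Hp a b; rewrite Psi_mulr big1 // => s _.
  have -> : Psi (fun w => f (a ++ (w ++ s.2) ++ b)) p =
            Psi (fun w => f (a ++ w ++ (s.2 ++ b))) p.
    by apply: Psi_ext => w; rewrite !catA.
  by rewrite Hp mulr0.
- by move=> p q _ Hp Hc a b; rewrite -(Psi_coef _ Hc) Hp.
Qed.

Lemma f_below (v : monomial n) : (mu v < mu w0)%N -> f v = 0.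
Proof.
move: {2}(mu v).+1 (ltnSn (mu v)) => N0; elim: N0 v => [|N0 IH] v hv.
  by rewrite ltn0 in hv.
move=> hlt; case E: (find_redex v) => [[[[a x] y] b]|].
  rewrite (f_some E) big_seq_cond big1 ?oppr0 // => t /andP [tin hne].
  have h := red_mu E tin hne.
  have h1 : (mu (a ++ t.2 ++ b) < N0)%N by apply: leq_trans h _; rewrite -ltnS.
  have h2 := ltn_trans h hlt.
  by rewrite IH ?mulr0.
rewrite (f_none E); case: eqP => // E'.
by rewrite E' ltnn in hlt.
Qed.

Lemma normal_contra (p : fpoly k n) : inI p -> is_tip p w0 -> find_redex w0 = None -> False.
Proof.
move=> Hp [ht1 ht2] E.
have Hf : Psi f p = 0.
  by rewrite -(inI_Psi Hp [::] [::]); apply: Psi_ext => w; rewrite cats0.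
set S := undup [seq t.2 | t <- p].
have hsub : {subset [seq t.2 | t <- p] <= S} by move=> v; rewrite mem_undup.
move: Hf; rewrite (@Psi_coefS f p S (undup_uniq _) hsub) => Hf.
have hw0 : w0 \in S.
  rewrite mem_undup; case: (boolP (w0 \in [seq t.2 | t <- p])) => // hn.
  case/negP: ht1; rewrite /coef big_seq_cond big1 // => t /andP [tin /eqP e].
  by case/negP: hn; apply/mapP; exists t.
have E2 : \sum_(v <- S) coef p v * f v =
          \sum_(v <- S) (if w0 == v then coef p w0 else 0).
  apply: eq_bigr => v _; case: eqP => [<-|ne]; first by rewrite (f_none E) eqxx mulr1.
  case: (coef p v =P 0) => [->|/eqP nz]; first by rewrite mul0r.
  have := ht2 v nz; rewrite /mon_le; case: eqP => [e|_ /= hlt]; first by case: ne.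
  by rewrite f_below ?mulr0 //; exact: mon_lt_mu.
rewrite E2 sum_if_uniq ?undup_uniq // in Hf.
by rewrite Hf eqxx in ht1.
Qed.

End Normal.

Section Final.
Variable k : fieldType.
Variable m : nat.
Local Notation n := m.+2.

Lemma coef_ab (g : fpoly k n) (a b v : monomial n) :
  coef (fpoly_mul [:: (1, a)] (fpoly_mul g [:: (1, b)])) v =
  Psi (fun w => (a ++ w ++ b == v)%:R) g.
Proof.
rewrite coef_Psi Psi_mull big_seq1 mul1r Psi_mulr big_seq1 mul1r /=.
by [].
Qed.

Lemma tip_ab (g : fpoly k n) (t a b : monomial n) : is_tip g t ->
  is_tip (fpoly_mul [:: (1, a)] (fpoly_mul g [:: (1, b)])) (a ++ t ++ b).
Proof.
case=> h1 h2; split.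
  by rewrite coef_ab (Psi_ext _ (G := fun w => (w == t)%:R)) -?coef_Psi // => w; rewrite cat_eq2.
move=> v; rewrite coef_ab => hv.
case/Psi_nz: (hv) => s sin.
case: (a ++ s.2 ++ b =P v) => [Ev _|_]; last by rewrite mulr0n eqxx.
have hc : coef g s.2 != 0.
  by rewrite coef_Psi -(Psi_ext _ (F := fun w => (a ++ w ++ b == v)%:R)) // => w; rewrite -Ev cat_eq2.
rewrite -Ev; case/orP: (h2 _ hc) => [/eqP ->|hl]; first by rewrite /mon_le eqxx.
by rewrite /mon_le (mon_lt_cat a b hl) orbT.
Qed.

End Final.

Theorem proposition3p7 (k : fieldType) (n : nat) (hn : (2 <= n)%N)
    (w : monomial n) :
  (exists p : fpoly k n, inI p /\ is_tip p w) <->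
  (exists (g : fpoly k n) (t a b : monomial n),
      inR g /\ is_tip g t /\ w = a ++ t ++ b).
Proof.
move: hn w; case: n => [|[|m]] // _ w; split.
- case=> p [Hp Ht].
  case E: (find_redex w) => [[[[a x] y] b]|]; last by case: (normal_contra Hp Ht E).
  case/find_some: E => -> hr.
  have H := isredex_rule k hr.
  exists (rule_of k x y), [:: x; y], a, b.
  by split; [exact: rule_inR H | split; [exact: rule_is_tip H | done]].
- case=> g [t [a [b [hR [ht ->]]]]].
  exists (fpoly_mul [:: (1, a)] (fpoly_mul g [:: (1, b)])); split.
    by apply: inI_mull; apply: inI_mulr; apply: inI_gen.
  exact: tip_ab.
Qed.
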